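(* Consider the sensor-network Kalman filtering model described in the context, and suppose that the network state process $\{\Xi(k)\}_{k\in\mathbb{N}_0}$ is a time-homogeneous Markov chain with transition probabilities $p_{ij}=\Pr\{\Xi(k+1)=j\mid \Xi(k)=i\}$, $i,j\in\mathbb{B}$, and that the power and bit-rate control laws are of the form $u_m(k)=\kappa_m(\Xi(k),h_1(k),\dots,h_M(k))$, $b_m(k)=\eta_m(\Xi(k),h_1(k),\dots,h_M(k))$ for (possibly nonlinear) mappings $\kappa_m,\eta_m$. For $i\in\mathbb{B}$ let $$\nu_i=\sum_{j\in\mathbb{B}}p_{ij}\Pr\{r(k)=0\mid \Xi(k)=j\},$$ the conditional probability that $C(k)$ does not have full column rank given $\Xi(k-1)=i$. If there exists $\rho\in[0,1)$ such that $$\max_{(i,k)\in\mathbb{B}\times\mathbb{N}_0}\nu_i\,\|A(k)\|^2\le\rho,$$ then the Kalman filter is exponentially bounded, i.e., there exist finite constants $\alpha,\beta$ and $\rho'\in[0,1)$ such that $\mathbf{E}\{\operatorname{tr}P(k\mid k-1)\}\le \alpha\rho'^k+\beta$ for all $k\in\mathbb{N}_0$.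
   Context: System: $x(k+1)=A(k)x(k)+w(k)$, $k\in\mathbb{N}_0$, $x(k)\in\mathbb{R}^n$, with $x(0)\sim\mathcal N(x_0,P_0)$ and $\{w(k)\}$ independent with $w(k)\sim\mathcal N(0,Q(k))$. Sensors $S_1,\dots,S_M$ measure $y_m(k)=C_mx(k)+v_m(k)$, $C_m\in\mathbb{R}^{l_m\times n}$, with $\{v_m(k)\}$ independent, $v_m(k)\sim\mathcal N(0,R_m(k))$, and the noises $w,v_1,\dots,v_M$ and $x(0)$ mutually independent. The sequences $\{A(k)\},\{Q(k)\},\{R_m(k)\}$ are deterministic, bounded and known at the gateway. $\|\cdot\|$ is the spectral norm. Network: a directed tree with vertices $S_0$ (the gateway, root), $S_1,\dots,S_M$; each $S_m$, $m\ge1$, has exactly one outgoing edge $\mathcal E_m=(S_m,\mathrm{parent}(S_m))$, and there is a unique path from $S_m$ to $S_0$, whose set of edges is denoted $\mathrm{edge}(\mathrm{path}(S_m))$. Network delays are neglected. Fading model: a network state process $\Xi(k)\in\mathbb{B}=\{1,\dots,|\mathbb{B}|\}$ (finite). Channel power gains $h_m(k)\ge0$ of links $\mathcal E_m$ have time-homogeneous conditional distributions given the network state, and for $(l,k)\neq(m,\ell)$, $h_l(k)$ and $h_m(\ell)$ are conditionally independent given $\Xi(k)=j,\Xi(\ell)=i$. Link success indicators $\gamma_m(k)\in\{0,1\}$ ($1$ iff transmission over $\mathcal E_m$ at time $k$ succeeds) satisfy $\Pr\{\gamma_m(k)=1\mid h_m(k)=h,u_m(k)=u,b_m(k)=b\}=f_m(hu,b)$,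 where $u_m(k)$ is the transmit power and $b_m(k)$ the bit-rate of $S_m$, and $f_m:\mathbb{R}_{\ge0}\times B\to[0,1]$ is increasing in its first and decreasing in its second argument. Under this model and the stated form of control laws, conditioned on the network states the link success variables $\gamma_m(k)$ are independent across $m$ and across time, with $\phi_{m|j}=\Pr\{\gamma_m(k)=1\mid\Xi(k)=j\}$ independent of $k$; the network, channel and dropout processes are independent of $x(0),w,v_m$. Estimator: $\theta_m(k)=\prod_{\mathcal E_i\in\mathrm{edge}(\mathrm{path}(S_m))}\gamma_i(k)$; $C(k)=[\theta_1(k)C_1;\dots;\theta_M(k)C_M]$ (stacked), $y(k)=[\theta_1(k)y_1(k);\dots;\theta_M(k)y_M(k)]$, $R(k)=\mathrm{diag}(R_1(k),\dots,R_M(k))$. The Kalman filter is $\hat x(k+1|k)=A(k)\hat x(k|k-1)+K(k)(y(k)-C(k)\hat x(k|k-1))$, $P(k+1|k)=A(k)P(k|k-1)A(k)^T+Q(k)-K(k)C(k)P(k|k-1)A(k)^T$, $K(k)=A(k)P(k|k-1)C(k)^T(C(k)P(k|k-1)C(k)^T+R(k))^{-1}$, with $P(0|-1)=P_0$, $\hat x(0|-1)=x_0$. Define $r(k)=1$ if $C(k)$ has full column rank and $r(k)=0$ otherwise. The Kalman filter is called exponentially bounded if there exist finite $\alpha,\beta$ and $\rho\in[0,1)$ with $\mathbf{E}\{\operatorname{tr}P(k|k-1)\}\le\alpha\rho^k+\beta$ for all $k\in\mathbb{N}_0$. *)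

(* Defs.v *)
From HB Require Import structures.
From mathcomp Require Import all_boot all_order all_algebra.
From mathcomp Require Import all_classical all_reals all_analysis.
Set Implicit Arguments. Unset Strict Implicit. Unset Printing Implicit Defensive.
Import Order.TTheory GRing.Theory Num.Theory.
Local Open Scope ring_scope.
Local Open Scope classical_set_scope.

Section KF.
Variable R : realType.

Definition vnorm2 (q : nat) (x : 'cV[R]_q) : R := \sum_(j < q) x j 0 ^+ 2.

Definition specnorm (p q : nat) (A : 'M[R]_(p, q)) : R :=
  sup [set Num.sqrt (vnorm2 (A *m x)) | x in [set x : 'cV[R]_q | vnorm2 x = 1]].

Definition psdmx (q : nat) (M : 'M[R]_q) : Prop :=
  M^T = M /\ forall x : 'cV[R]_q, 0 <= (x^T *m M *m x) 0 0.

Definition pdmx (q : nat) (M : 'M[R]_q) : Prop :=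
  M^T = M /\ forall x : 'cV[R]_q, x != 0 -> 0 < (x^T *m M *m x) 0 0.

(** Tree: [par m = Some l] means parent(S_m) = S_l, [None] means the gateway S_0.
    [anc t m] is the node reached from S_m after t edges (None = gateway). *)
Definition anc (M : nat) (par : 'I_M -> option 'I_M) (t : nat) (m : 'I_M)
  : option 'I_M := iter t (fun o => obind par o) (Some m).

Definition is_tree (M : nat) (par : 'I_M -> option 'I_M) : Prop :=
  forall m : 'I_M, anc par M m = None.

(** edges of path(S_m): the edges E_l for the sensors l visited on the path *)
Definition on_path (M : nat) (par : 'I_M -> option 'I_M) (m l : 'I_M) : bool :=
  [exists t : 'I_M.+1, anc par t m == Some l].

Definition theta (M : nat) (par : 'I_M -> option 'I_M) (g : 'I_M -> bool)
  (m : 'I_M) : bool := [forall l : 'I_M, on_path par m l ==> g l].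

Definition Cstack (n M : nat) (l : 'I_M -> nat) (C : forall m : 'I_M, 'M[R]_(l m, n))
  (th : 'I_M -> bool) : 'M[R]_(\sum_(m < M) l m, n) :=
  \mxcol_(m < M) ((th m)%:R *: C m).

Definition Rdiag (M : nat) (l : 'I_M -> nat) (Rm : forall m : 'I_M, 'M[R]_(l m))
  : 'M[R]_(\sum_(m < M) l m) := \mxdiag_(m < M) Rm m.

(** Riccati recursion of the Kalman filter: riccati k = P(k|k-1) *)
Fixpoint riccati (n L : nat) (A Q : nat -> 'M[R]_n) (Cs : nat -> 'M[R]_(L, n))
  (Rs : nat -> 'M[R]_L) (P0 : 'M[R]_n) (k : nat) : 'M[R]_n :=
  match k with
  | 0 => P0
  | k'.+1 =>
    let P := riccati A Q Cs Rs P0 k' in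
    let K := A k' *m P *m (Cs k')^T *m invmx (Cs k' *m P *m (Cs k')^T + Rs k') in
    A k' *m P *m (A k')^T + Q k' - K *m Cs k' *m P *m (A k')^T
  end.

Definition bern (b : bool) (q : R) : R := if b then q else 1 - q.

(** Pr{ r(k) = 0 | Xi(k) = j }: under the conditional law given Xi(k) = j the
    link indicators gamma_m(k) are independent Bernoulli(phi_{m|j}). *)
Definition prob_r0_given (n M : nat) (l : 'I_M -> nat)
  (C : forall m : 'I_M, 'M[R]_(l m, n)) (par : 'I_M -> option 'I_M)
  (B : finType) (phi : 'I_M -> B -> R) (j : B) : R :=
  \sum_(g : {ffun 'I_M -> bool} | \rank (Cstack C (theta par g)) != n)
     \prod_(m < M) bern (g m) (phi m j).

Definition nu (n M : nat) (l : 'I_M -> nat)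
  (C : forall m : 'I_M, 'M[R]_(l m, n)) (par : 'I_M -> option 'I_M)
  (B : finType) (p : B -> B -> R) (phi : 'I_M -> B -> R) (i : B) : R :=
  \sum_(j : B) p i j * prob_r0_given C par phi j.

End KF.

(* Main.v *)
Require Import Defs.
From HB Require Import structures.
From mathcomp Require Import all_boot all_order all_algebra.
From mathcomp Require Import all_classical all_reals all_analysis.
From mathcomp Require Import ring lra.
Import Order.TTheory GRing.Theory Num.Theory.
Local Open Scope ring_scope.
Local Open Scope classical_set_scope.
Set Implicit Arguments. Unset Strict Implicit. Unset Printing Implicit Defensive.

Section LA1.
Variable R : realType.

Lemma vnorm2_ge0 q (x : 'cV[R]_q) : 0 <= vnorm2 x.
Proof. by apply: sumr_ge0 => j _; rewrite sqr_ge0. Qed.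

Lemma vnorm2Z q (a : R) (x : 'cV[R]_q) : vnorm2 (a *: x) = a ^+ 2 * vnorm2 x.
Proof.
rewrite /vnorm2 mulr_sumr; apply: eq_bigr => j _; by rewrite mxE exprMn.
Qed.

Lemma vnorm2_0 q : vnorm2 (0 : 'cV[R]_q) = 0.
Proof. by rewrite /vnorm2 big1 // => j _; rewrite mxE expr0n. Qed.

Lemma vnorm2_eq0 q (x : 'cV[R]_q) : vnorm2 x = 0 -> x = 0.
Proof.
move=> h; apply/matrixP => i j; rewrite (ord1 j) mxE.
have : x i 0 ^+ 2 <= vnorm2 x.
  rewrite /vnorm2 (bigD1 i) //= lerDl; apply: sumr_ge0 => k _; exact: sqr_ge0.
rewrite h => h0.
have : x i 0 ^+ 2 == 0 by rewrite eq_le h0 sqr_ge0.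
by rewrite sqrf_eq0 => /eqP.
Qed.

Lemma entry_le1 q (x : 'cV[R]_q) j : vnorm2 x = 1 -> `|x j 0| <= 1.
Proof.
move=> h.
have : x j 0 ^+ 2 <= 1.
  rewrite -h /vnorm2 (bigD1 j) //= lerDl; apply: sumr_ge0 => k _; exact: sqr_ge0.
move=> h2; rewrite -(@ler_pXn2r _ 2) ?nnegrE ?normr_ge0 // expr1n.
by rewrite real_normK ?num_real.
Qed.

Definition mxbnd p q (A : 'M[R]_(p, q)) : R :=
  \sum_(i < p) (\sum_(j < q) `|A i j|) ^+ 2.

Lemma unit_bnd p q (A : 'M[R]_(p, q)) x : vnorm2 x = 1 -> vnorm2 (A *m x) <= mxbnd A.
Proof.
move=> h; rewrite /vnorm2 /mxbnd; apply: ler_sum => i _; rewrite mxE.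
rewrite -(real_normK (num_real (\sum_j A i j * x j 0))).
rewrite ler_pXn2r ?nnegrE ?normr_ge0 //; last by apply: sumr_ge0.
apply: le_trans (ler_norm_sum _ _ _) _; apply: ler_sum => j _.
by rewrite normrM ler_piMr ?normr_ge0 // (entry_le1 _ h).
Qed.

Definition snset p q (A : 'M[R]_(p, q)) :=
  [set Num.sqrt (vnorm2 (A *m x)) | x in [set x : 'cV[R]_q | vnorm2 x = 1]].

Lemma snset_ub p q (A : 'M[R]_(p, q)) : has_ubound (snset A).
Proof.
exists (Num.sqrt (mxbnd A)) => y [x hx <-]; rewrite ler_sqrt.
  exact: unit_bnd.
by apply: sumr_ge0 => i _; exact: sqr_ge0.
Qed.

Lemma specnorm_ge0 p q (A : 'M[R]_(p, q)) : 0 <= specnorm A.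
Proof.
rewrite /specnorm; case: q A => [|q] A.
  suff -> : [set Num.sqrt (vnorm2 (A *m x)) | x in [set x : 'cV[R]_0 | vnorm2 x = 1]] = set0.
    by rewrite sup0.
  apply/seteqP; split => // y [x hx _]; exfalso; move: hx.
  by rewrite /= /vnorm2 big_ord0 => /eqP; rewrite eq_sym oner_eq0.
set e : 'cV[R]_q.+1 := delta_mx ord0 0.
have he : vnorm2 e = 1.
  rewrite /vnorm2 (bigD1 ord0) //= big1 ?addr0 => [|j hj].
    by rewrite !mxE !eqxx expr1n.
  by rewrite !mxE (negPf hj) expr0n.
apply: le_trans (sqrtr_ge0 (vnorm2 (A *m e))) _.
by apply: (ub_le_sup (snset_ub A)); exists e.
Qed.

Lemma specnorm_le p q (A : 'M[R]_(p, q)) x :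
  vnorm2 (A *m x) <= specnorm A ^+ 2 * vnorm2 x.
Proof.
have [->|hx] := eqVneq x 0.
  by rewrite mulmx0 !vnorm2_0 mulr0.
have hp : 0 < vnorm2 x.
  rewrite lt_def vnorm2_ge0 andbT; apply/eqP => /vnorm2_eq0; exact/eqP.
set s := Num.sqrt (vnorm2 x).
have hs : 0 < s by rewrite sqrtr_gt0.
have hs2 : s ^+ 2 = vnorm2 x by rewrite sqr_sqrtr // vnorm2_ge0.
set u := s^-1 *: x.
have hu : vnorm2 u = 1 by rewrite vnorm2Z exprVn hs2 mulVf // gt_eqF.
have h1 : Num.sqrt (vnorm2 (A *m u)) <= specnorm A.
  by apply: (ub_le_sup (snset_ub A)); exists u.
have h2 : vnorm2 (A *m u) <= specnorm A ^+ 2.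
  rewrite -(sqr_sqrtr (vnorm2_ge0 (A *m u))).
  by rewrite ler_pXn2r ?nnegrE ?sqrtr_ge0 ?specnorm_ge0.
move: h2; rewrite /u -scalemxAr vnorm2Z exprVn hs2.
by rewrite ler_pdivrMl // mulrC.
Qed.

End LA1.

Section LA2.
Variable R : realType.

Definition bil q (M : 'M[R]_q) (x y : 'cV[R]_q) : R := (x^T *m M *m y) 0 0.

Lemma bilC q (M : 'M[R]_q) x y : M^T = M -> bil M x y = bil M y x.
Proof.
move=> hM; rewrite /bil -[x^T *m M *m y]trmxK [in LHS]mxE.
by rewrite !trmx_mul trmxK hM mulmxA.
Qed.

Lemma bilDr q (M : 'M[R]_q) x y z : bil M x (y + z) = bil M x y + bil M x z.
Proof. by rewrite /bil mulmxDr mxE. Qed.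
Lemma bilDl q (M : 'M[R]_q) x y z : bil M (x + y) z = bil M x z + bil M y z.
Proof. by rewrite /bil linearD /= !mulmxDl mxE. Qed.
Lemma bilZr q (M : 'M[R]_q) a x y : bil M x (a *: y) = a * bil M x y.
Proof. by rewrite /bil -scalemxAr mxE. Qed.
Lemma bilZl q (M : 'M[R]_q) a x y : bil M (a *: x) y = a * bil M x y.
Proof. by rewrite /bil linearZ /= -!scalemxAl mxE. Qed.
Lemma bilNl q (M : 'M[R]_q) x y : bil M (- x) y = - bil M x y.
Proof. by rewrite -scaleN1r bilZl mulN1r. Qed.
Lemma bilNr q (M : 'M[R]_q) x y : bil M x (- y) = - bil M x y.
Proof. by rewrite -scaleN1r bilZr mulN1r. Qed.
Lemma bilMDl q (M N : 'M[R]_q) x y : bil (M + N) x y = bil M x y + bil N x y.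
Proof. by rewrite /bil mulmxDr mulmxDl mxE. Qed.
Lemma bilMN q (M : 'M[R]_q) x y : bil (- M) x y = - bil M x y.
Proof. by rewrite /bil mulmxN mulNmx mxE. Qed.
Lemma bilMZ q (M : 'M[R]_q) a x y : bil (a *: M) x y = a * bil M x y.
Proof. by rewrite /bil -scalemxAr -scalemxAl mxE. Qed.

Lemma bil_delta q (M : 'M[R]_q) i j : bil M (delta_mx i 0) (delta_mx j 0) = M i j.
Proof.
rewrite /bil mxE (bigD1 j) //= big1 ?addr0 => [|k hk]; last first.
  by rewrite [delta_mx _ _ _ _]mxE (negPf hk) mulr0.
rewrite [delta_mx _ _ _ _]mxE !eqxx mulr1 mxE (bigD1 i) //= big1 ?addr0 => [|k hk]; last first.
  by rewrite !mxE (negPf hk) mul0r.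
by rewrite !mxE !eqxx mul1r.
Qed.

Lemma bil_outer q (u x : 'cV[R]_q) :
  bil (u *m u^T) x x = (bil 1%:M u x) ^+ 2.
Proof.
rewrite /bil mulmx1.
have -> : x^T *m (u *m u^T) *m x = (x^T *m u) *m (u^T *m x) by rewrite !mulmxA.
rewrite mxE big_ord1 expr2; congr (_ * _).
by rewrite -[x^T *m u]trmxK trmx_mul trmxK mxE.
Qed.

Lemma bil_mul p q (M : 'M[R]_q) (X : 'M[R]_(p, q)) x y :
  bil (X *m M *m X^T) x y = bil M (X^T *m x) (X^T *m y).
Proof. by rewrite /bil trmx_mul trmxK !mulmxA. Qed.

Definition qf q (M : 'M[R]_q) x := bil M x x.

Lemma qf_expand q (M : 'M[R]_q) a x y : M^T = M ->
  qf M (a *: x + y) = a ^+ 2 * qf M x + 2 * a * bil M x y + qf M y.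
Proof.
move=> hM; rewrite /qf !bilDl !bilDr !bilZl !bilZr (@bilC q M y x hM).
by rewrite expr2; ring.
Qed.

Lemma psd_qf q (M : 'M[R]_q) x : psdmx M -> 0 <= qf M x.
Proof. by case=> _ h; exact: h. Qed.

Lemma pd_psd q (M : 'M[R]_q) : pdmx M -> psdmx M.
Proof.
case=> hs h; split => // x; have [->|hx] := eqVneq x 0.
  by rewrite mulmx0 mxE.
exact/ltW/h.
Qed.

Lemma psd_cong p q (X : 'M[R]_(p, q)) (M : 'M[R]_q) :
  psdmx M -> psdmx (X *m M *m X^T).
Proof.
case=> hs h; split; first by rewrite !trmx_mul trmxK hs mulmxA.
move=> x; have := h (X^T *m x); by rewrite trmx_mul trmxK !mulmxA.
Qed.

Lemma psd_add q (M N : 'M[R]_q) : psdmx M -> psdmx N -> psdmx (M + N).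
Proof.
case=> h1 h2 [h3 h4]; split; first by rewrite linearD /= h1 h3.
move=> x; rewrite mulmxDr mulmxDl mxE; exact: addr_ge0.
Qed.

Lemma psd_diag q (M : 'M[R]_q) i : psdmx M -> 0 <= M i i.
Proof. by move=> h; rewrite -bil_delta; exact: psd_qf. Qed.

Lemma psd_tr q (M : 'M[R]_q) : psdmx M -> 0 <= \tr M.
Proof. by move=> h; apply: sumr_ge0 => i _; exact: psd_diag. Qed.

Lemma lin_ge0 (a b : R) : (forall t, 0 <= 2 * t * a + b) -> a = 0.
Proof.
move=> h; apply/eqP; apply/negPn/negP => ha.
have := h (- (b + 1) / (2 * a)).
have h2 : 2 * a != 0 by rewrite mulf_neq0 // pnatr_eq0.
have -> : 2 * (- (b + 1) / (2 * a)) * a = - (b + 1).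
  by field.
move=> h0; lra.
Qed.

Lemma psd_zero_diag q (M : 'M[R]_q) i j : psdmx M -> M i i = 0 -> M i j = 0.
Proof.
move=> hM hii; have [hs _] := hM.
apply: (@lin_ge0 _ (qf M (delta_mx j 0))) => t.
have := psd_qf (t *: delta_mx i 0 + delta_mx j 0) hM.
rewrite qf_expand // /qf bil_delta hii mulr0 add0r bil_delta; by [].
Qed.

Lemma tr_outer q (u : 'cV[R]_q) : \tr (u *m u^T) = vnorm2 u.
Proof.
apply: eq_bigr => i _; rewrite mxE big_ord1 !mxE; by rewrite expr2.
Qed.

End LA2.

Section LA3.
Variable R : realType.

Lemma psd_schur q (X : 'M[R]_q) i : psdmx X -> 0 < X i i ->
  psdmx (X - (X i i)^-1 *: ((X *m delta_mx i (0:'I_1)) *m (X *m delta_mx i (0:'I_1))^T)).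
Proof.
move=> hX hc; have [hs _] := hX; set u := X *m delta_mx i 0; set c := X i i.
split.
  by rewrite linearB /= linearZ /= trmx_mul trmxK hs.
move=> x; rewrite -/(bil _ x x) bilMDl bilMN bilMZ bil_outer.
set b := bil 1%:M u x.
have hb : bil X (delta_mx i (0:'I_1)) x = b.
  by rewrite /b /bil /u mulmx1 trmx_mul hs.
have := psd_qf ((- (b / c)) *: delta_mx i 0 + x) hX.
rewrite qf_expand // /qf bil_delta hb -/c.
have -> : (- (b / c)) ^+ 2 * c + 2 * - (b / c) * b + bil X x x =
          bil X x x - c^-1 * b ^+ 2.
  by field; rewrite gt_eqF.
by [].
Qed.

Lemma tr_lin p q (A : 'M[R]_(p, q)) (X Y : 'M[R]_q) a :
  \tr (A *m (X + a *: Y) *m A^T) = \tr (A *m X *m A^T) + a * \tr (A *m Y *m A^T).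
Proof.
by rewrite mulmxDr mulmxDl mxtraceD -scalemxAr -scalemxAl mxtraceZ.
Qed.

Lemma tr_cong_le p q (A : 'M[R]_(p, q)) (X : 'M[R]_q) :
  psdmx X -> \tr (A *m X *m A^T) <= specnorm A ^+ 2 * \tr X.
Proof.
set s := specnorm A ^+ 2.
suff : forall N (X : 'M[R]_q), psdmx X -> (#|[pred i | X i i != 0%R]| <= N)%N ->
  \tr (A *m X *m A^T) <= s * \tr X by move=> h hX; exact: (h _ _ hX (leqnn _)).
elim=> [|N IH] {}X hX hN.
  have X0 : X = 0.
    apply/matrixP => i j; rewrite mxE; apply: (psd_zero_diag _ hX).
    apply/eqP; apply/negPn/negP => hi.
    by move: hN; rewrite leqn0 => /eqP/card0_eq/(_ i); rewrite inE hi.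
  by rewrite X0 mulmx0 mul0mx !linear0 mulr0.
have [hN0|] := posnP #|[pred i | X i i != 0%R]|.
  by apply: IH => //; rewrite hN0.
case/card_gt0P => i; rewrite inE => hi0.
have hc : 0 < X i i by rewrite lt_def hi0 psd_diag.
set c := X i i; set u := X *m delta_mx i (0:'I_1).
set Y := X - c^-1 *: (u *m u^T).
have hY : psdmx Y by exact: psd_schur.
have hs := hX.1.
have hXY : X = Y + c^-1 *: (u *m u^T) by rewrite /Y subrK.
have hu : forall j, u j 0 = X j i.
  move=> j; rewrite /u mxE (bigD1 i) //= big1 ?addr0 => [|k hk].
    by rewrite mxE !eqxx mulr1.
  by rewrite mxE (negPf hk) mulr0.
have hYe : Y = X - c^-1 *: (u *m u^T) by [].
clearbody Y u.
have hYd : forall j, Y j j = X j j - c^-1 * (X j i) ^+ 2.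
  move=> j; rewrite hYe !mxE big_ord1 mxE !hu expr2.
  by rewrite mulrA.
have hcard : (#|[pred j | Y j j != 0%R]| <= N)%N.
  have hsub : [pred j | Y j j != 0%R] \subset [predD1 [pred j | X j j != 0%R] & i].
    apply/fintype.subsetP => j; rewrite !inE => hj; apply/andP; split.
      apply/eqP => eji; move: hj; rewrite eji hYd /c.
      by rewrite expr2 mulrA mulVf // mul1r subrr eqxx.
    apply/eqP => hjj; move: hj; rewrite hYd hjj.
    by rewrite (psd_zero_diag _ hX hjj) expr0n mulr0 subrr eqxx.
  apply: leq_trans (subset_leq_card hsub) _.
  move: hN; rewrite (cardD1 i [pred j | X j j != 0%R]) inE hi0 /= add1n ltnS.
  by apply: leq_trans; apply: subset_leq_card; apply/fintype.subsetP => j; rewrite !inE.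
have IHY := IH Y hY hcard.
have hout : \tr (A *m (u *m u^T) *m A^T) <= s * \tr (u *m u^T).
  have -> : A *m (u *m u^T) *m A^T = (A *m u) *m (A *m u)^T.
    by rewrite trmx_mul !mulmxA.
  by rewrite !tr_outer; exact: specnorm_le.
rewrite hXY tr_lin mxtraceD mxtraceZ mulrDr.
apply: lerD => //.
rewrite mulrCA; apply: ler_wpM2l => //; by rewrite invr_ge0 ltW.
Qed.

End LA3.

Section LA4.
Variable R : realType.
Variables (n L : nat) (P : 'M[R]_n) (C : 'M[R]_(L, n)) (Rr : 'M[R]_L).

Let S := C *m P *m C^T + Rr.

Lemma zm1 (V : zmodType) (p x k u t : V) : (p - x) + (k - u - (t - x)) = p - t - u + k.
Proof.
rewrite opprB !addrA (addrAC (p - x + k)) (addrAC (p - x)) addrNK.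
by rewrite [LHS]addrAC [RHS]addrAC (addrAC p (-t)).
Qed.

Lemma G_expand (K : 'M[R]_(n, L)) : P^T = P ->
  (1%:M - K *m C) *m P *m (1%:M - K *m C)^T + K *m Rr *m K^T =
  P - K *m C *m P - P *m C^T *m K^T + K *m S *m K^T.
Proof.
move=> hP.
rewrite linearB /= trmx1 trmx_mul.
rewrite mulmxBl mul1mx mulmxBr mulmx1 /S mulmxDr mulmxDl !mulmxA.
by rewrite !mulNmx mulmxDl ?mulmxA opprD opprK !addrA.
Qed.
Let Si := invmx S.
Let K0 := P *m C^T *m Si.
Definition Ppost := P - P *m C^T *m Si *m C *m P.

Lemma sq_expand (K : 'M[R]_(n, L)) : P^T = P -> S^T = S -> S \in unitmx ->
  Ppost + (K - K0) *m S *m (K - K0)^T =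
  P - K *m C *m P - P *m C^T *m K^T + K *m S *m K^T.
Proof.
move=> hP hS hU.
have hSi : Si^T = Si by rewrite /Si trmx_inv hS.
have e1 : forall k (Y : 'M[R]_(k, L)) k' (Z : 'M[R]_(L, k')), Y *m S *m Si *m Z = Y *m Z.
  by move=> k Y k' Z; rewrite -(mulmxA Y) mulmxV // mulmx1.
have e2 : forall k (Y : 'M[R]_(k, L)) k' (Z : 'M[R]_(L, k')), Y *m Si *m S *m Z = Y *m Z.
  by move=> k Y k' Z; rewrite -(mulmxA Y) mulVmx // mulmx1.
rewrite linearB /= /K0 !trmx_mul trmxK hSi hP.
rewrite mulmxBl !mulmxBr !mulmxBl !mulmxA !e1 !e2.
rewrite /Ppost; exact: zm1.
Qed.

Lemma S_sym : P^T = P -> pdmx Rr -> S^T = S.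
Proof. by move=> hP [hR _]; rewrite /S linearD /= !trmx_mul trmxK hP hR mulmxA. Qed.

Lemma S_pd : psdmx P -> pdmx Rr -> pdmx S.
Proof.
move=> hP hR; split; first exact: S_sym hP.1 hR.
move=> x hx; rewrite -/(bil _ x x) /S bilMDl bil_mul.
apply: ltr_wpDl; first exact: (psd_qf _ hP).
by case: hR => _ h; exact: h.
Qed.

Lemma S_unit : psdmx P -> pdmx Rr -> S \in unitmx.
Proof.
move=> hP hR; have [hS hpd] := S_pd hP hR.
rewrite -row_free_unit -kermx_eq0; apply/negPn/negP => hK.
case/matrix0Pn: hK => i [j hij].
set v := row i (kermx S).
have hv : v *m S = 0 by rewrite /v -row_mul mulmx_ker row0.
have hx : v^T != 0.
  apply/negP => /eqP h0; move: hij.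
  have e : kermx S i j = v^T j 0 by rewrite /v !mxE.
  by rewrite e h0 mxE eqxx.
have := hpd _ hx; by rewrite trmxK hv mul0mx mxE ltxx.
Qed.

Lemma Ppost_psd : psdmx P -> pdmx Rr -> psdmx Ppost.
Proof.
move=> hP hR; have hU := S_unit hP hR; have hS := S_sym hP.1 hR.
have := sq_expand K0 hP.1 hS hU; rewrite subrr mul0mx mul0mx addr0 => ->.
rewrite -G_expand; last exact: hP.1.
apply: psd_add; apply: psd_cong => //; exact: pd_psd.
Qed.

Lemma Ppost_le : psdmx P -> pdmx Rr -> psdmx (P - Ppost).
Proof.
move=> hP hR; have hU := S_unit hP hR; have hS := S_sym hP.1 hR.
have := sq_expand 0 hP.1 hS hU.
rewrite !mul0mx trmx0 !mulmx0 !subr0 addr0 => <-.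
rewrite addrC addKr; apply: psd_cong; apply: pd_psd; exact: S_pd.
Qed.

Lemma Ppost_leK (Kc : 'M[R]_(n, L)) : Kc *m C = 1%:M -> psdmx P -> pdmx Rr ->
  psdmx (Kc *m Rr *m Kc^T - Ppost).
Proof.
move=> hK hP hR; have hU := S_unit hP hR; have hS := S_sym hP.1 hR.
have := sq_expand Kc hP.1 hS hU; rewrite -G_expand; last exact: hP.1.
rewrite hK subrr mul0mx mul0mx add0r => <-.
rewrite addrC addKr; apply: psd_cong; apply: pd_psd; exact: S_pd.
Qed.

End LA4.

Definition rstep (R : realType) n L (A Q P : 'M[R]_n) (C : 'M[R]_(L, n)) (Rr : 'M[R]_L) :=
  A *m P *m A^T + Q -
  (A *m P *m C^T *m invmx (C *m P *m C^T + Rr)) *m C *m P *m A^T.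

Section LA5.
Variable R : realType.
Variables (n L : nat) (A Q P : 'M[R]_n) (C : 'M[R]_(L, n)) (Rr : 'M[R]_L).

Lemma rstep_eq : rstep A Q P C Rr = A *m Ppost P C Rr *m A^T + Q.
Proof.
by rewrite /rstep /Ppost mulmxBr mulmxBl !mulmxA addrAC.
Qed.

Lemma tr_mono p (B : 'M[R]_(p, n)) (X Y : 'M[R]_n) :
  psdmx (Y - X) -> \tr (B *m X *m B^T) <= \tr (B *m Y *m B^T).
Proof.
move=> h; have := psd_tr (psd_cong B h).
by rewrite mulmxBr mulmxBl linearB /= subr_ge0.
Qed.

Lemma rstep_psd : psdmx P -> psdmx Q -> pdmx Rr -> psdmx (rstep A Q P C Rr).
Proof.
move=> hP hQ hR; rewrite rstep_eq; apply: psd_add => //.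
apply: psd_cong; exact: Ppost_psd.
Qed.

Lemma rstep_tr0 : psdmx P -> psdmx Q -> pdmx Rr ->
  \tr (rstep A Q P C Rr) <= specnorm A ^+ 2 * \tr P + \tr Q.
Proof.
move=> hP hQ hR; rewrite rstep_eq mxtraceD lerD2r.
apply: le_trans (tr_cong_le A hP).
apply: tr_mono; exact: Ppost_le.
Qed.

Lemma rstep_tr1 (Kc : 'M[R]_(n, L)) : Kc *m C = 1%:M ->
  psdmx P -> psdmx Q -> pdmx Rr ->
  \tr (rstep A Q P C Rr) <= specnorm A ^+ 2 * \tr (Kc *m Rr *m Kc^T) + \tr Q.
Proof.
move=> hK hP hQ hR; rewrite rstep_eq mxtraceD lerD2r.
apply: le_trans (tr_cong_le A (psd_cong Kc (pd_psd hR))).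
apply: tr_mono; exact: Ppost_leK.
Qed.

End LA5.

Section LA6.
Variable R : realType.

Lemma amgm (t a b : R) : 0 < t -> a * b <= (t * a ^+ 2 + t^-1 * b ^+ 2) / 2.
Proof.
move=> ht.
have h : 0 <= t^-1 * (t * a - b) ^+ 2 by rewrite mulr_ge0 ?sqr_ge0 // invr_ge0 ltW.
have -> : (t * a ^+ 2 + t^-1 * b ^+ 2) / 2 = a * b + t^-1 * (t * a - b) ^+ 2 / 2.
  by field; rewrite gt_eqF.
by rewrite lerDl divr_ge0.
Qed.

Lemma bil_sum q (M : 'M[R]_q) y : bil M y y = \sum_i y i 0 * (M *m y) i 0.
Proof.
rewrite /bil -mulmxA mxE; apply: eq_bigr => i _; by rewrite mxE.
Qed.

Lemma qf_le_sn q (M : 'M[R]_q) y : bil M y y <= specnorm M * vnorm2 y.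
Proof.
set s := specnorm M; have hs0 : 0 <= s := specnorm_ge0 M.
have hz := specnorm_le M y; rewrite -/s in hz.
rewrite bil_sum.
have [s0|spos] := eqVneq s 0.
  have s0' : specnorm M = 0 := s0.
  move: hz; rewrite /s s0' expr0n /= mul0r => hz.
  have : vnorm2 (M *m y) = 0 by apply/eqP; rewrite eq_le hz vnorm2_ge0.
  move/vnorm2_eq0 => ->; rewrite ?mul0r big1 // => i _; by rewrite mxE mulr0.
have hs : 0 < s by rewrite lt_def spos hs0.
have h1 : \sum_i y i 0 * (M *m y) i 0 <=
    (\sum_i (s * y i 0 ^+ 2 + s^-1 * (M *m y) i 0 ^+ 2)) / 2.
  by rewrite mulr_suml; apply: ler_sum => i _; exact: amgm.
apply: le_trans h1 _.
rewrite big_split /= -!mulr_sumr.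
have : s^-1 * vnorm2 (M *m y) <= s * vnorm2 y.
  by rewrite ler_pdivrMl // mulrA -expr2.
rewrite /vnorm2 => h.
by rewrite ler_pdivrMr // mulr_natr mulr2n lerD2l.
Qed.

Lemma tr_le_sn q (M : 'M[R]_q) : \tr M <= q%:R * specnorm M.
Proof.
rewrite /mxtrace -[q in q%:R]card_ord -sum1_card natr_sum mulr_suml.
apply: ler_sum => i _; rewrite -bil_delta mul1r.
apply: le_trans (qf_le_sn _ _) _.
have -> : vnorm2 (delta_mx i (0:'I_1) : 'cV[R]_q) = 1.
  rewrite /vnorm2 (bigD1 i) //= big1 ?addr0 => [|j hj].
    by rewrite !mxE !eqxx expr1n.
  by rewrite !mxE (negPf hj) expr0n.
by rewrite mulr1.
Qed.

Lemma bil_mxdiag M (l : 'I_M -> nat) (B : forall m : 'I_M, 'M[R]_(l m)) x :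
  bil (\mxdiag_(m < M) B m) x x = \sum_m bil (B m) (submxcol x m) (submxcol x m).
Proof.
rewrite /bil -{1 2}(submxcolK x) tr_mxcol -mulmxA mul_mxdiag_mxcol mul_mxrow_mxcol.
rewrite summxE; apply: eq_bigr => m _; by rewrite mulmxA.
Qed.

Lemma Rdiag_pd M (l : 'I_M -> nat) (B : forall m : 'I_M, 'M[R]_(l m)) :
  (forall m, pdmx (B m)) -> pdmx (Rdiag B).
Proof.
move=> hB; split.
  rewrite /Rdiag tr_mxdiag; congr (\mxdiag_i _) => //.
  by apply: functional_extensionality_dep => i; case: (hB i).
move=> x hx; rewrite -/(bil _ x x) bil_mxdiag.
have [[m hm]|hno] := pselect (exists m, submxcol x m != 0); last first.
  exfalso; move: hx; rewrite -(submxcolK x).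
  have -> : (\mxcol_(i < M) submxcol x i) = \mxcol_(i < M) (0 : 'M[R]_(l i, 1)).
    congr (\mxcol_i _); apply: functional_extensionality_dep => i.
    by apply/eqP/negPn/negP => h; apply: hno; exists i.
  by rewrite mxcol0 eqxx.
rewrite (bigD1 m) //=; apply: ltr_pwDl.
  by case: (hB m) => _ h; exact: h.
apply: sumr_ge0 => i _; apply: psd_qf; exact: pd_psd.
Qed.

End LA6.

Section P1.
Variables (R : realType) (d : measure_display) (Omega : measurableType d)
  (Pr : probability Omega R) (B : finType) (M : nat)
  (Xi : nat -> Omega -> B) (gamma : nat -> 'I_M -> Omega -> bool).
Hypothesis hXi : forall k (j : B), measurable [set w | Xi k w = j].
Hypothesis hga : forall k (m : 'I_M), measurable [set w | gamma k m w].

Local Notation X := (B * {ffun 'I_M -> bool})%type.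
Variable x0 : X.

Fixpoint allh (k : nat) : seq (seq X) :=
  if k is k'.+1 then [seq rcons h x | h <- allh k', x <- enum {: X}] else [:: [::]].

Lemma mem_allh k h : (h \in allh k) = (size h == k).
Proof.
elim: k h => [|k IH] h /=.
  by rewrite inE; case: h.
apply/allpairsP/idP => [[[h' x] /= [h1 _ ->]]|].
  by rewrite size_rcons eqSS -IH.
case/lastP: h => [//|h' x]; rewrite size_rcons eqSS => hs.
by exists (h', x); rewrite /= IH hs mem_enum.
Qed.

Lemma allh_uniq k : uniq (allh k).
Proof.
elim: k => [//|k IH] /=.
apply: allpairs_uniq => //; first exact: enum_uniq.
move=> [h x] [h' x'] _ _ /= e.
by have [-> ->] := (rcons_inj e).
Qed.

Definition obs t w : X := (Xi t w, [ffun m => gamma t m w]).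

Definition hw k w : seq X := mkseq (fun t => obs t w) k.

Definition Ev (h : seq X) : set Omega :=
  [set w | forall t, (t < size h)%N -> nth x0 h t = obs t w].

Lemma Ev_hw k h w : size h = k -> (Ev h w <-> h = hw k w).
Proof.
move=> hs; split => [hE|->].
  apply: (@eq_from_nth _ x0); first by rewrite size_mkseq.
  by move=> t ht; rewrite hE // nth_mkseq // -hs.
by move=> t; rewrite size_mkseq => ht; rewrite nth_mkseq.
Qed.

Lemma meas_gam t (g : {ffun 'I_M -> bool}) (s : seq 'I_M) :
  measurable [set w | forall m, m \in s -> gamma t m w = g m].
Proof.
elim: s => [|m s IH].
  have -> : [set w | forall m, m \in [::] -> gamma t m w = g m] = setT.
    by apply/seteqP; split => // w _ m.
  exact: measurableT.
have -> : [set w | forall m0, m0 \in m :: s -> gamma t m0 w = g m0] =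
  [set w | gamma t m w = g m] `&` [set w | forall m, m \in s -> gamma t m w = g m].
  apply/seteqP; split => w /=.
    by move=> h; split => [|m0 hm0]; apply: h; rewrite inE ?eqxx ?hm0 ?orbT.
  by move=> [h1 h2] m0; rewrite inE => /orP [/eqP ->|]; [exact: h1|exact: h2].
apply: measurableI => //.
case: (g m).
  have -> : [set w | gamma t m w = true] = [set w | gamma t m w] by [].
  exact: hga.
have -> : [set w | gamma t m w = false] = ~` [set w | gamma t m w].
  apply/seteqP; split => w /=; first by move=> ->.
  by case: (gamma t m w).
exact: measurableC.
Qed.

Lemma meas_obs t x : measurable [set w | x = obs t w].
Proof.
have -> : [set w | x = obs t w] =
   [set w | Xi t w = x.1] `&` [set w | forall m, m \in enum 'I_M -> gamma t m w = x.2 m].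
  apply/seteqP; split => w /=.
    move=> e; subst x; rewrite /obs /=; split => // m _; by rewrite ffunE.
  case: x => b g /= [<- h]; rewrite /obs; congr pair; apply/ffunP => m; rewrite ffunE h //.
  by rewrite mem_enum.
apply: measurableI => //; exact: meas_gam.
Qed.

Lemma meas_Ev h : measurable (Ev h).
Proof.
elim/last_ind: h => [|h x IH].
  have -> : Ev [::] = setT by apply/seteqP; split => // w _ t.
  exact: measurableT.
have -> : Ev (rcons h x) = Ev h `&` [set w | x = obs (size h) w].
  apply/seteqP; split => w /=.
    move=> hE; split.
      move=> t ht; have := hE t; rewrite size_rcons nth_rcons ht; apply; exact: ltnW.
    by have := hE (size h); rewrite size_rcons nth_rcons ltnn eqxx; apply.
  move=> [h1 h2] t; rewrite size_rcons ltnS leq_eqVlt => /orP [/eqP ->|ht].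
    by rewrite nth_rcons ltnn eqxx.
  rewrite nth_rcons ht; exact: h1.
apply: measurableI => //; exact: meas_obs.
Qed.

Definition wt h : R := fine (Pr (Ev h)).

Lemma wtE h : Pr (Ev h) = (wt h)%:E.
Proof. rewrite /wt fineK //; apply: fin_num_measure; exact: meas_Ev. Qed.

Lemma wt_ge0 h : 0 <= wt h.
Proof. by rewrite /wt fine_ge0 // measure_ge0. Qed.

Lemma int_decomp k (F : seq X -> R) : (forall h, 0 <= F h) ->
  (\int[Pr]_w (F (hw k w))%:E = (\sum_(h <- allh k) wt h * F h)%:E)%E.
Proof.
move=> hF.
have pt : forall w, (F (hw k w))%:E =
   (\sum_(h <- allh k) (F h * \1_(Ev h) w)%:E)%E.
  move=> w; rewrite sumEFin; congr EFin.
  have hin : hw k w \in allh k by rewrite mem_allh size_mkseq.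
  rewrite (bigD1_seq (hw k w)) //=; last exact: allh_uniq.
  rewrite big_seq_cond big1 ?addr0 => [|h /andP [hh hne]].
    rewrite indicE mem_set ?mulr1 //; by apply/(Ev_hw _ (size_mkseq _ _)).
  rewrite indicE memNset ?mulr0 //; move=> hE; move/eqP: hne; apply.
  apply/(Ev_hw w); last exact: hE.
  by move: hh; rewrite mem_allh => /eqP.
rewrite (eq_integral (fun w => \sum_(h <- allh k) (F h * \1_(Ev h) w)%:E)%E); last first.
  by move=> w _; exact: pt.
rewrite ge0_integral_sum //; last first.
    by move=> h w _; rewrite lee_fin mulr_ge0 // indicE ler0n.
  move=> h; apply/measurable_realfun.measurable_EFinP; apply: measurable_realfun.measurable_funM.
    exact: measurable_cst.
  exact: measurable_realfun.measurable_indic (meas_Ev h).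
rewrite -sumEFin; apply: eq_bigr => h _.
rewrite (@integralZl_indic _ _ _ _ _ measurableT (fun _ => Ev h));
  try (by move=> hlt; exfalso; move: (hF h); rewrite leNgt hlt); try exact: meas_Ev.
rewrite integral_indic //; last exact: meas_Ev.
have -> : Ev h `&` [set: Omega] = Ev h by exact: setIT.
transitivity ((F h)%:E * (wt h)%:E)%E; first by congr (_ * _)%E; exact: wtE.
by rewrite -EFinM mulrC.
Qed.

Lemma sum_wt k : \sum_(h <- allh k) wt h = 1.
Proof.
apply: EFin_inj.
have h := int_decomp k (F := fun _ => 1) (fun _ => ler01).
rewrite (eq_bigr (fun h => wt h * 1)); last by move=> ? _; rewrite mulr1.
rewrite -h.
transitivity (\int[Pr]_w (cst 1%E w))%E; first by [].
by rewrite integral_cst // mul1e; exact: probability_setT.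
Qed.

Variables (p : B -> B -> R) (phi : 'I_M -> B -> R).
Hypothesis HM : forall (K : nat) (xi : nat -> B),
     Pr [set w | forall t, (t <= K.+1)%N -> Xi t w = xi t] =
     (Pr [set w | forall t, (t <= K)%N -> Xi t w = xi t] * (p (xi K) (xi K.+1))%:E)%E.
Hypothesis HG : forall (K : nat) (xi : nat -> B) (g : nat -> 'I_M -> bool),
     Pr [set w | forall t, (t <= K)%N ->
                   Xi t w = xi t /\ forall m : 'I_M, gamma t m w = g t m] =
     (Pr [set w | forall t, (t <= K)%N -> Xi t w = xi t] *
      (\prod_(t < K.+1) \prod_(m < M) bern (g t m) (phi m (xi t)))%:E)%E.

Definition xih (h : seq X) t := (nth x0 h t).1.
Definition gh (h : seq X) t m := (nth x0 h t).2 m.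
Definition beta (x : X) := \prod_(m < M) bern (x.2 m) (phi m x.1).

Definition Xc K (xi : nat -> B) := [set w | forall t, (t <= K)%N -> Xi t w = xi t].

Lemma meas_Xc K xi : measurable (Xc K xi).
Proof.
elim: K => [|K IH].
  have -> : Xc 0 xi = [set w | Xi 0 w = xi 0].
    apply/seteqP; split => w /=; first by apply.
    by move=> h t; rewrite leqn0 => /eqP ->.
  exact: hXi.
have -> : Xc K.+1 xi = Xc K xi `&` [set w | Xi K.+1 w = xi K.+1].
  apply/seteqP; split => w /=.
    by move=> h; split; [move=> t ht; apply: h; exact: leqW|apply: h].
  move=> [h1 h2] t; rewrite leq_eqVlt => /orP [/eqP ->|ht] //.
  by apply: h1.
exact: measurableI.
Qed.

Lemma Xc_ext K xi xi' : (forall t, (t <= K)%N -> xi t = xi' t) -> Xc K xi = Xc K xi'.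
Proof.
move=> e; apply/seteqP; split => w /= h t ht; [rewrite -e //|rewrite e //]; exact: h.
Qed.

Lemma Ev_eq h K : size h = K.+1 ->
  Ev h = [set w | forall t, (t <= K)%N ->
                   Xi t w = xih h t /\ forall m : 'I_M, gamma t m w = gh h t m].
Proof.
move=> hs; apply/seteqP; split => w /= hE t ht.
  have := hE t; rewrite hs ltnS => /(_ ht); rewrite /xih /gh => ->.
  by split => // m; rewrite ffunE.
have [e1 e2] := hE t (ltac:(by rewrite -ltnS -hs)).
rewrite /obs e1 /xih /gh in e2 *.
case: (nth x0 h t) e2 => b g /= e2; congr pair; apply/ffunP => m; by rewrite ffunE e2.
Qed.

Lemma wt_rcons h x K : size h = K.+1 ->
  wt (rcons h x) = wt h * (p (xih h K) x.1 * beta x).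
Proof.
move=> hs.
have hs' : size (rcons h x) = K.+2 by rewrite size_rcons hs.
set xi := xih (rcons h x); set g := gh (rcons h x).
have exi : forall t, (t <= K)%N -> xi t = xih h t.
  by move=> t ht; rewrite /xi /xih nth_rcons hs ltnS ht.
have eg : forall t m, (t <= K)%N -> g t m = gh h t m.
  by move=> t m ht; rewrite /g /gh nth_rcons hs ltnS ht.
have exK1 : xi K.+1 = x.1 by rewrite /xi /xih nth_rcons hs ltnn eqxx.
have egK1 : forall m, g K.+1 m = x.2 m by move=> m; rewrite /g /gh nth_rcons hs ltnn eqxx.
set Ph := \prod_(t < K.+1) \prod_(m < M) bern (gh h t m) (phi m (xih h t)).
have e1 : Pr (Ev h) = (Pr (Xc K (xih h)) * Ph%:E)%E.
  by rewrite (Ev_eq hs); exact: HG.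
have e2 : Pr (Ev (rcons h x)) = (Pr (Xc K.+1 xi) *
     (\prod_(t < K.+2) \prod_(m < M) bern (g t m) (phi m (xi t)))%:E)%E.
  by rewrite (Ev_eq hs'); exact: HG.
have e3 : Pr (Xc K.+1 xi) = (Pr (Xc K xi) * (p (xi K) (xi K.+1))%:E)%E by exact: HM.
have e4 : Xc K xi = Xc K (xih h) by exact: Xc_ext.
have e5 : \prod_(t < K.+2) \prod_(m < M) bern (g t m) (phi m (xi t)) = Ph * beta x.
  rewrite big_ord_recr /=; congr (_ * _).
    apply: eq_bigr => t _; apply: eq_bigr => m _.
    by rewrite eg ?exi // -ltnS.
  by apply: eq_bigr => m _; rewrite egK1 exK1.
have hc : Pr (Xc K (xih h)) = (fine (Pr (Xc K (xih h))))%:E.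
  rewrite fineK //; apply: fin_num_measure; exact: meas_Xc.
rewrite /wt e2 e3 e4 e5 e1 hc -!EFinM /=.
rewrite exK1 (exi K (leqnn K)).
by ring.
Qed.

Lemma beta_sum j : \sum_(g : {ffun 'I_M -> bool}) beta (j, g) = 1.
Proof.
rewrite /beta /= -(bigA_distr_bigA (fun m b => bern b (phi m j))) /=.
by apply: big1 => m _; rewrite big_bool /bern /= addrC subrK.
Qed.

Hypothesis hp : forall i j, 0 <= p i j.
Hypothesis hp1 : forall i, \sum_(j : B) p i j = 1.
Hypothesis hphi : forall m j, 0 <= phi m j <= 1.

Lemma beta_ge0 x : 0 <= beta x.
Proof.
apply: prodr_ge0 => m _; rewrite /bern; case: (x.2 m); have := hphi m x.1; case/andP => h1 h2 //.
by rewrite subr_ge0.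
Qed.

Variable rk : {ffun 'I_M -> bool} -> bool.
Definition nuv i := \sum_(j : B) p i j * \sum_(g : {ffun 'I_M -> bool} | ~~ rk g) \prod_(m < M) bern (g m) (phi m j).

Lemma S1 l : \sum_(x <- enum {: X}) p l x.1 * beta x = 1.
Proof.
rewrite big_enum /=.
rewrite (eq_bigr (fun x => p l x.1 * beta (x.1, x.2))); last by case.
rewrite -(pair_bigA _ (fun j g => p l j * beta (j, g))) /=.
rewrite -[RHS](hp1 l); apply: eq_bigr => j _.
by rewrite -mulr_sumr beta_sum mulr1.
Qed.

Lemma S2 l : \sum_(x <- enum {: X}) p l x.1 * beta x * (if rk x.2 then 0 else 1) = nuv l.
Proof.
rewrite big_enum /=.
rewrite (eq_bigr (fun x => p l x.1 * beta (x.1, x.2) * (if rk x.2 then 0 else 1))); last by case.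
rewrite -(pair_bigA _ (fun j g => p l j * beta (j, g) * (if rk g then 0 else 1))) /=.
apply: eq_bigr => j _.
rewrite mulr_sumr [in RHS]big_mkcond /=; apply: eq_bigr => g _.
by case: (rk g) => /=; rewrite ?mulr0 ?mulr1.
Qed.

Variables (a : nat -> R) (rho c1 : R).
Hypothesis ha : forall k, 0 <= a k.
Hypothesis hnu : forall i k, nuv i * a k <= rho.
Hypothesis hc1 : 0 <= c1.

Lemma Ek_step (V : seq X -> R) k : (forall h, 0 <= V h) -> (0 < k)%N ->
  (forall h x, size h = k -> V (rcons h x) <= c1 + (if rk x.2 then 0 else a k * V h)) ->
  \sum_(h <- allh k.+1) wt h * V h <= c1 + rho * \sum_(h <- allh k) wt h * V h.
Proof.
move=> hV hk hrec.
rewrite [allh k.+1]/= big_allpairs_dep /=.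
rewrite -[c1]mulr1 -(sum_wt k) mulr_sumr mulr_sumr -big_split /=.
rewrite big_seq_cond [X in _ <= X]big_seq_cond; apply: ler_sum => h /andP[hh _].
have hs : size h = k by move: hh; rewrite mem_allh => /eqP.
case: k hk hrec hs {hh} => [//|K] _ hrec hs.
set l := xih h K.
have -> : \sum_(x <- enum {: X}) wt (rcons h x) * V (rcons h x) =
   \sum_(x <- enum {: X}) wt h * (p l x.1 * beta x) * V (rcons h x).
  by apply: eq_bigr => x _; rewrite (wt_rcons _ hs).
have hl : \sum_(x <- enum {: X}) wt h * (p l x.1 * beta x) * V (rcons h x) <=
   \sum_(x <- enum {: X}) (wt h * c1 * (p l x.1 * beta x) +
       wt h * (a K.+1 * V h) * (p l x.1 * beta x * (if rk x.2 then 0 else 1))).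
  apply: ler_sum => x _.
  have hw0 : 0 <= wt h * (p l x.1 * beta x) by rewrite !mulr_ge0 ?wt_ge0 ?beta_ge0.
  apply: le_trans (ler_wpM2l hw0 (hrec h x hs)) _.
  by case: (rk x.2); rewrite ?mulr0 ?addr0 ?mulr1; rewrite le_eqVlt; apply/orP; left; apply/eqP; ring.
apply: le_trans hl _.
rewrite big_split /= -!mulr_sumr S1 S2 mulr1.
rewrite [c1 * _]mulrC lerD2l.
rewrite -mulrA [rho * _]mulrCA; apply: ler_wpM2l; first exact: wt_ge0.
rewrite mulrC mulrA; apply: ler_wpM2r; first exact: hV.
exact: hnu.
Qed.

Lemma Ek_le k (V : seq X -> R) b : (forall h, h \in allh k -> V h <= b) ->
  \sum_(h <- allh k) wt h * V h <= b.
Proof.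
move=> hV.
have h1 : \sum_(h <- allh k) wt h * V h <= \sum_(h <- allh k) wt h * b.
  rewrite big_seq_cond [X in _ <= X]big_seq_cond; apply: ler_sum => h /andP[hh _].
  by apply: ler_wpM2l; [exact: wt_ge0|exact: hV].
by apply: le_trans h1 _; rewrite -mulr_suml sum_wt mul1r.
Qed.

Hypothesis hrho : 0 <= rho.

Lemma Ek_all (V : seq X -> R) (Bd : R) : (forall h, 0 <= V h) ->
  (forall k h x, size h = k -> V (rcons h x) <= c1 + (if rk x.2 then 0 else a k * V h)) ->
  c1 + a 0 * V [::] <= Bd -> c1 + rho * Bd <= Bd ->
  forall k, (0 < k)%N -> \sum_(h <- allh k) wt h * V h <= Bd.
Proof.
move=> hV hrec hB1 hB2; elim => [//|k IH] _.
case: k IH => [|k] IH.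
  apply: Ek_le => h; rewrite mem_allh; case/lastP: h => [//|h x].
  rewrite size_rcons eqSS => /eqP /size0nil ->.
  apply: le_trans (hrec 0%N [::] x erefl) _; apply: le_trans hB1.
  rewrite lerD2l; case: (rk x.2) => //; apply: mulr_ge0 => //.
apply: le_trans (Ek_step hV _ (hrec k.+1)) _ => //.
apply: le_trans hB2; rewrite lerD2l; apply: ler_wpM2l => //; exact: IH.
Qed.

End P1.

Fixpoint Vf (R : realType) (r : nat -> bool) (a : nat -> R) (c1 v0 : R) (k : nat) : R :=
  if k is k'.+1 then (if r k' then c1 else a k' * Vf r a c1 v0 k' + c1) else v0.

Lemma Vf_ext (R : realType) (r r' : nat -> bool) (a : nat -> R) c1 v0 k :
  (forall t, (t < k)%N -> r t = r' t) -> Vf r a c1 v0 k = Vf r' a c1 v0 k.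
Proof.
elim: k => [//|k IH] h /=.
by rewrite h // IH // => t ht; apply: h; exact: ltnW.
Qed.

Lemma Vf_ge0 (R : realType) (r : nat -> bool) (a : nat -> R) c1 v0 k :
  0 <= v0 -> 0 <= c1 -> (forall k, 0 <= a k) -> 0 <= Vf r a c1 v0 k.
Proof.
move=> h0 h1 ha; elim: k => [//|k IH] /=.
case: (r k) => //; apply: addr_ge0 => //; exact: mulr_ge0.
Qed.

Lemma riccati_ext (R : realType) n L (A Q : nat -> 'M[R]_n) (Cs Cs' : nat -> 'M[R]_(L, n))
  (Rs : nat -> 'M[R]_L) P0 k :
  (forall t, (t < k)%N -> Cs t = Cs' t) ->
  riccati A Q Cs Rs P0 k = riccati A Q Cs' Rs P0 k.
Proof.
elim: k => [//|k IH] h /=.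
by rewrite h // IH // => t ht; apply: h; exact: ltnW.
Qed.

Lemma path_bound (R : realType) n L (A Q : nat -> 'M[R]_n) (Cs : nat -> 'M[R]_(L, n))
  (Rs : nat -> 'M[R]_L) P0 (r : nat -> bool) (Kc : nat -> 'M[R]_(n, L)) (c1 : R) :
  psdmx P0 -> (forall k, psdmx (Q k)) -> (forall k, pdmx (Rs k)) ->
  (forall k, r k -> Kc k *m Cs k = 1%:M) ->
  (forall k, r k ->
     specnorm (A k) ^+ 2 * \tr (Kc k *m Rs k *m (Kc k)^T) + \tr (Q k) <= c1) ->
  (forall k, \tr (Q k) <= c1) ->
  forall k, psdmx (riccati A Q Cs Rs P0 k) /\
    \tr (riccati A Q Cs Rs P0 k) <= Vf r (fun k => specnorm (A k) ^+ 2) c1 (\tr P0) k.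
Proof.
move=> hP0 hQ hR hK hc1 hcQ; elim => [|k [IHp IHt]]; first by split.
have e : riccati A Q Cs Rs P0 k.+1 =
         rstep (A k) (Q k) (riccati A Q Cs Rs P0 k) (Cs k) (Rs k) by [].
rewrite e; split; first exact: (rstep_psd (A k) (Cs k) IHp (hQ k) (hR k)).
rewrite /=; case hr: (r k).
  apply: le_trans (rstep_tr1 (A k) (hK k hr) IHp (hQ k) (hR k)) _; exact: hc1.
apply: le_trans (rstep_tr0 (A k) (Cs k) IHp (hQ k) (hR k)) _.
apply: lerD; last exact: hcQ.
by apply: ler_wpM2l; first exact: sqr_ge0.
Qed.

Unset Implicit Arguments.

Theorem theorem1
  (R : realType) (d : measure_display) (Omega : measurableType d)
  (Pr : probability Omega R)
  (n M : nat) (l : 'I_M -> nat)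
  (A Q : nat -> 'M[R]_n) (P0 : 'M[R]_n)
  (C : forall m : 'I_M, 'M[R]_(l m, n))
  (Rm : nat -> forall m : 'I_M, 'M[R]_(l m))
  (par : 'I_M -> option 'I_M)
  (B : finType) (p : B -> B -> R) (phi : 'I_M -> B -> R)
  (Xi : nat -> Omega -> B) (gamma : nat -> 'I_M -> Omega -> bool) :
  is_tree par ->
  (exists c : R, forall k, specnorm (A k) <= c) ->
  (exists c : R, forall k, specnorm (Q k) <= c) ->
  (exists c : R, forall k (m : 'I_M), specnorm (Rm k m) <= c) ->
  psdmx P0 -> (forall k, psdmx (Q k)) -> (forall k (m : 'I_M), pdmx (Rm k m)) ->
  (forall k (j : B), measurable [set w | Xi k w = j]) ->
  (forall k (m : 'I_M), measurable [set w | gamma k m w]) ->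
  (forall i j, 0 <= p i j) -> (forall i, \sum_(j : B) p i j = 1) ->
  (forall (K : nat) (xi : nat -> B),
     Pr [set w | forall t, (t <= K.+1)%N -> Xi t w = xi t] =
     (Pr [set w | forall t, (t <= K)%N -> Xi t w = xi t] * (p (xi K) (xi K.+1))%:E)%E) ->
  (forall m j, 0 <= phi m j <= 1) ->
  (forall (K : nat) (xi : nat -> B) (g : nat -> 'I_M -> bool),
     Pr [set w | forall t, (t <= K)%N ->
                   Xi t w = xi t /\ forall m : 'I_M, gamma t m w = g t m] =
     (Pr [set w | forall t, (t <= K)%N -> Xi t w = xi t] *
      (\prod_(t < K.+1) \prod_(m < M) bern (g t m) (phi m (xi t)))%:E)%E) ->
  (exists rho : R, 0 <= rho < 1 /\
     forall (i : B) (k : nat), nu C par p phi i * specnorm (A k) ^+ 2 <= rho) ->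
  exists alpha beta rho' : R, 0 <= rho' < 1 /\
    forall k : nat,
      (\int[Pr]_w (\tr (riccati A Q
                          (fun t => Cstack C (theta par (gamma t ^~ w)))
                          (fun t => Rdiag (Rm t)) P0 k))%:E
       <= (alpha * rho' ^+ k + beta)%:E)%E.
Proof.
move=> htree [cA hcA] [cQ hcQ] [cR hcR] hP0 hQ hR hXi hga hp hp1 HM hphi HG
  [rho [/andP [hrho0 hrho1] hnu0]].
pose Cg := fun g : {ffun 'I_M -> bool} => Cstack C (theta par g).
pose rk := fun g : {ffun 'I_M -> bool} => \rank (Cg g) == n.
pose a := fun k => specnorm (A k) ^+ 2.
have hex : forall g, exists K : 'M[R]_(n, \sum_(m < M) l m), rk g -> K *m Cg g = 1%:M.
  move=> g; case hg: (rk g); last by exists 0.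
  have /row_fullP [K hK] : row_full (Cg g) by exact: hg.
  by exists K.
pose Kcg := fun g => projT1 (cid (hex g)).
have hKcg : forall g, rk g -> Kcg g *m Cg g = 1%:M := fun g => projT2 (cid (hex g)).
have sA : forall k, 0 <= specnorm (A k) := fun k => specnorm_ge0 (A k).
have ha_le : forall k, a k <= cA ^+ 2.
  move=> k; have := sA k; have := hcA k; rewrite /a; nra.
pose tRb := \sum_(m < M) (l m)%:R * `|cR|.
have tRb0 : 0 <= tRb by apply: sumr_ge0 => m _; apply: mulr_ge0.
have htrR : forall k, \tr (Rdiag (Rm k)) <= tRb.
  move=> k; rewrite /Rdiag mxtrace_mxdiag; apply: ler_sum => m _.
  apply: le_trans (tr_le_sn _) _; apply: ler_wpM2l => //.
  exact: le_trans (hcR k m) (ler_norm _).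
pose cK := \sum_(g : {ffun 'I_M -> bool}) specnorm (Kcg g) ^+ 2 * tRb.
have cK0 : 0 <= cK by apply: sumr_ge0 => g _; apply: mulr_ge0 => //; exact: sqr_ge0.
have hRpsd : forall k, psdmx (Rdiag (Rm k)) := fun k => pd_psd (Rdiag_pd (hR k)).
have hKle : forall g k, \tr (Kcg g *m Rdiag (Rm k) *m (Kcg g)^T) <= cK.
  move=> g k; apply: le_trans (tr_cong_le _ (hRpsd k)) _.
  apply: le_trans (ler_wpM2l (sqr_ge0 _) (htrR k)) _.
  rewrite /cK (bigD1 g) //= lerDl; apply: sumr_ge0 => g' _.
  apply: mulr_ge0 => //; exact: sqr_ge0.
have hKge : forall g k, 0 <= \tr (Kcg g *m Rdiag (Rm k) *m (Kcg g)^T).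
  move=> g k; exact: psd_tr (psd_cong _ (hRpsd k)).
pose c1 := cA ^+ 2 * cK + n%:R * `|cQ|.
have hc10 : 0 <= c1 by apply: addr_ge0; apply: mulr_ge0 => //; exact: sqr_ge0.
have htrQ' : forall k, \tr (Q k) <= n%:R * `|cQ|.
  move=> k; apply: le_trans (tr_le_sn _) _; apply: ler_wpM2l => //.
  exact: le_trans (hcQ k) (ler_norm _).
have htrQ : forall k, \tr (Q k) <= c1.
  move=> k; apply: le_trans (htrQ' k) _; rewrite /c1 lerDr.
  apply: mulr_ge0 => //; exact: sqr_ge0.
pose x0 : (B * {ffun 'I_M -> bool})%type := (Xi 0%N point, [ffun _ => false]).
pose r := fun (h : seq (B * {ffun 'I_M -> bool})) t => rk (nth x0 h t).2.
pose Csh := fun (h : seq (B * {ffun 'I_M -> bool})) t => Cg (nth x0 h t).2.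
pose Rk := fun t => Rdiag (Rm t).
pose F := fun h => \tr (riccati A Q (Csh h) Rk P0 (size h)).
pose V := fun h => Vf (r h) a c1 (\tr P0) (size h).
have hpath : forall h, psdmx (riccati A Q (Csh h) Rk P0 (size h)) /\ F h <= V h.
  move=> h; apply: (@path_bound R n _ A Q (Csh h) Rk P0 (r h)
                   (fun t => Kcg (nth x0 h t).2) c1) => //.
  - move=> k; exact: Rdiag_pd (hR k).
  - move=> k hr; exact: hKcg.
  - move=> k hr; apply: lerD; last exact: htrQ'.
    apply: ler_pM => //; [exact: sqr_ge0|exact: hKge|exact: ha_le|exact: hKle].
have hF0 : forall h, 0 <= F h := fun h => psd_tr (hpath h).1.
have hV0 : forall h, 0 <= V h.
  move=> h; apply: Vf_ge0 => //; [exact: psd_tr|move=> k; exact: sqr_ge0].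
have hrec : forall k h x, size h = k ->
    V (rcons h x) <= c1 + (if rk x.2 then 0 else a k * V h).
  move=> k h x hs; rewrite /V size_rcons /=.
  have -> : r (rcons h x) (size h) = rk x.2 by rewrite /r nth_rcons ltnn eqxx.
  rewrite (@Vf_ext _ (r (rcons h x)) (r h)); last by move=> t ht; rewrite /r nth_rcons ht.
  rewrite hs; case: (rk x.2); first by rewrite addr0.
  by rewrite addrC.
have hnu : forall i k, nuv p phi rk i * a k <= rho := fun i k => hnu0 i k.
pose Bd := c1 + cA ^+ 2 * \tr P0 + c1 / (1 - rho).
have hu : 0 <= c1 / (1 - rho) by apply: divr_ge0 => //; rewrite subr_ge0 ltW.
have htr0 : 0 <= \tr P0 := psd_tr hP0.
have hBd0 : 0 <= Bd by apply: addr_ge0 => //; apply: addr_ge0 => //; apply: mulr_ge0 => //; exact: sqr_ge0.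
have hB1 : c1 + a 0%N * V [::] <= Bd.
  have h1 : a 0%N * \tr P0 <= cA ^+ 2 * \tr P0 by apply: ler_wpM2r => //; exact: ha_le.
  rewrite /Bd /V /=; lra.
have hB2 : c1 + rho * Bd <= Bd.
  have hz : 0 <= cA ^+ 2 * \tr P0 by apply: mulr_ge0 => //; exact: sqr_ge0.
  have e : rho * (c1 / (1 - rho)) = c1 / (1 - rho) - c1.
    by field; rewrite subr_eq0 eq_sym lt_eqF.
  have h2 : rho * (c1 + cA ^+ 2 * \tr P0) <= c1 + cA ^+ 2 * \tr P0.
    by apply: ler_piMl; [exact: addr_ge0|exact: ltW].
  rewrite /Bd mulrDr e; lra.
have hEk := Ek_all hXi hga x0 HM HG hp hp1 hphi (fun k => sqr_ge0 _) hnu hrho0 hV0 hrec hB1 hB2.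
exists 0, (Bd + \tr P0), 0; split; first by apply/andP; split; [exact: lexx|exact: ltr01].
move=> k.
have ric : forall w, riccati A Q (fun t => Cstack C (theta par (gamma t ^~ w)))
    (fun t => Rdiag (Rm t)) P0 k =
    riccati A Q (Csh (hw Xi gamma k w)) Rk P0 (size (hw Xi gamma k w)).
  move=> w; rewrite size_mkseq; apply: riccati_ext => t ht.
  rewrite /Csh /Cg /hw nth_mkseq //= /obs /=; congr (Cstack C _).
  apply: boolp.funext => m; rewrite /theta.
  by apply: eq_forallb => l'; rewrite ffunE.
rewrite (eq_integral (fun w => (F (hw Xi gamma k w))%:E)); last first.
  by move=> w _; rewrite /F -ric.
rewrite (int_decomp Pr hXi hga x0 k hF0) lee_fin.
have hle : \sum_(h <- allh B M k) wt Pr Xi gamma x0 h * F h <=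
           \sum_(h <- allh B M k) wt Pr Xi gamma x0 h * V h.
  apply: ler_sum => h _; apply: ler_wpM2l; [exact: wt_ge0|exact: (hpath h).2].
apply: le_trans hle _.
rewrite mul0r add0r.
clear ric; case: k => [|k].
  have := sum_wt Pr hXi hga x0 0%N; rewrite /= !big_seq1 => ->.
  by rewrite mul1r /V /= lerDr.
apply: le_trans (hEk k.+1 erefl) _; by rewrite lerDl.
Qed.
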